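(* Let $N\ge1$, $n,m\ge1$, $\kappa>0$, and let $\{(U_i,V_i)\}_{i=1}^N$ be a solution of $$\dot U_j=\frac{\kappa}{N}\sum_{k=1}^N\big(\langle V_j,V_k\rangle_FU_k-\langle V_k,V_j\rangle_FU_jU_k^\dagger U_j\big),\qquad \dot V_j=\frac{\kappa}{N}\sum_{k=1}^N\big(\langle U_j,U_k\rangle_FV_k-\langle U_k,U_j\rangle_FV_jV_k^\dagger V_j\big),$$ with $(U_j,V_j)(0)\in\mathbf U(n)\times\mathbf U(m)$. Then $\mathcal E(U,V):=1-\frac1{N^2}\sum_{i,j=1}^N\langle U_i,U_j\rangle_F\langle V_i,V_j\rangle_F$ satisfies, for $t>0$, $$\frac{d}{dt}\mathcal E(U,V)=-\frac{1}{\kappa N}\sum_{j=1}^N\big(\|\dot U_j\|_F^2+\|\dot V_j\|_F^2\big).$$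
   Context: $\langle A,B\rangle_F=\mathrm{tr}(A^\dagger B)$, $\|A\|_F=\sqrt{\langle A,A\rangle_F}$; $\mathbf U(n)$ denotes the unitary group. *)

(* Defs.v *)
From HB Require Import structures.
From mathcomp Require Import all_boot all_order all_algebra.
From mathcomp Require Import all_classical all_reals all_analysis.
From mathcomp Require Import complex.
Set Implicit Arguments. Unset Strict Implicit. Unset Printing Implicit Defensive.
Import Order.TTheory GRing.Theory Num.Theory.
Local Open Scope ring_scope.
Local Open Scope complex_scope.
Import numFieldNormedType.Exports.
Local Open Scope classical_set_scope.

Section Defs.
Variable R : realType.

Definition adj (p q : nat) (A : 'M[R[i]]_(p, q)) : 'M[R[i]]_(q, p) :=
  (map_mx (@conjc R) A)^T.

Definition frob (p : nat) (A B : 'M[R[i]]_p) : R[i] := \tr (adj A *m B).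

(* ||A||_F^2 = <A,A>_F  (which is a nonnegative real; we take its real part) *)
Definition frob_norm2 (p : nat) (A : 'M[R[i]]_p) : R := complex.Re (frob A A).

Definition unitary (p : nat) (A : 'M[R[i]]_p) : Prop := adj A *m A = 1%:M.

Definition cderiv (f : R -> R[i]) (t : R) (d : R[i]) : Prop :=
  is_derive t 1 (fun s => complex.Re (f s)) (complex.Re d) /\
  is_derive t 1 (fun s => complex.Im (f s)) (complex.Im d).

Definition mx_deriv (p : nat) (X : R -> 'M[R[i]]_p) (t : R) (D : 'M[R[i]]_p) : Prop :=
  forall a b, cderiv (fun s => X s a b) t (D a b).

Definition mx_cont_nonneg (p : nat) (X : R -> 'M[R[i]]_p) : Prop :=
  forall a b,
    {within `[0, +oo[, continuous (fun s => complex.Re (X s a b))} /\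
    {within `[0, +oo[, continuous (fun s => complex.Im (X s a b))}.

Definition flow_rhs (N p q : nat) (kappa : R)
  (X : 'I_N -> R -> 'M[R[i]]_p) (Y : 'I_N -> R -> 'M[R[i]]_q)
  (j : 'I_N) (t : R) : 'M[R[i]]_p :=
  (kappa / N%:R)%:C *:
    \sum_(k < N) (frob (Y j t) (Y k t) *: X k t
                  - frob (Y k t) (Y j t) *: (X j t *m adj (X k t) *m X j t)).

Definition energy (N p q : nat)
  (X : 'I_N -> R -> 'M[R[i]]_p) (Y : 'I_N -> R -> 'M[R[i]]_q) (t : R) : R[i] :=
  1 - (1 / (N%:R ^+ 2))%:C *
      \sum_(a < N) \sum_(b < N) (frob (X a t) (X b t) * frob (Y a t) (Y b t)).

End Defs.

(* Main.v *)
Require Import Defs.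
From HB Require Import structures.
From mathcomp Require Import all_boot all_order all_algebra.
From mathcomp Require Import all_classical all_reals all_analysis.
From mathcomp Require Import complex.
From mathcomp Require Import ring lra.
Import Order.TTheory GRing.Theory Num.Theory.
Local Open Scope ring_scope.
Local Open Scope complex_scope.
Import numFieldNormedType.Exports.
Local Open Scope classical_set_scope.
Set Implicit Arguments. Unset Strict Implicit.



Section Aux.
Variable R : realType.
Implicit Types x y : R[i].

Lemma xReD x y : complex.Re (x + y) = complex.Re x + complex.Re y.
Proof. by case: x; case: y. Qed.
Lemma xImD x y : complex.Im (x + y) = complex.Im x + complex.Im y.
Proof. by case: x; case: y. Qed.
Lemma xReN x : complex.Re (- x) = - complex.Re x.
Proof. by case: x. Qed.
Lemma xImN x : complex.Im (- x) = - complex.Im x.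
Proof. by case: x. Qed.
Lemma xReM x y : complex.Re (x * y) = complex.Re x * complex.Re y - complex.Im x * complex.Im y.
Proof. by case: x; case: y. Qed.
Lemma xImM x y : complex.Im (x * y) = complex.Re x * complex.Im y + complex.Im x * complex.Re y.
Proof. by case: x => a b; case: y => c d /=. Qed.
Lemma xReJ x : complex.Re ((conjc x)) = complex.Re x.
Proof. by case: x. Qed.
Lemma xImJ x : complex.Im ((conjc x)) = - complex.Im x.
Proof. by case: x. Qed.
Lemma xReC (k : R) : complex.Re (k%:C) = k. Proof. by []. Qed.
Lemma xImC (k : R) : complex.Im (k%:C) = 0. Proof. by []. Qed.
Lemma xRe0 : complex.Re (0 : R[i]) = 0. Proof. by []. Qed.
Lemma xIm0 : complex.Im (0 : R[i]) = 0. Proof. by []. Qed.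
Lemma xRe_sum (I : Type) (r : seq I) (P : pred I) (F : I -> R[i]) :
  complex.Re (\sum_(i <- r | P i) F i) = \sum_(i <- r | P i) complex.Re (F i).
Proof. exact: (big_morph _ xReD xRe0). Qed.
Lemma xIm_sum (I : Type) (r : seq I) (P : pred I) (F : I -> R[i]) :
  complex.Im (\sum_(i <- r | P i) F i) = \sum_(i <- r | P i) complex.Im (F i).
Proof. exact: (big_morph _ xImD xIm0). Qed.

Lemma rderiv_ext (f g : R -> R) (t d : R) : (forall s, f s = g s) ->
  is_derive t 1 f d -> is_derive t 1 g d.
Proof. by move=> fg; have -> : f = g by apply: funext. Qed.

Lemma rderiv_sum (I : Type) (r : seq I) (P : pred I) (F : I -> R -> R) (dF : I -> R) (t : R) :
  (forall i, P i -> is_derive t 1 (F i) (dF i)) ->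
  is_derive t 1 (fun s => \sum_(i <- r | P i) F i s) (\sum_(i <- r | P i) dF i).
Proof.
move=> H; elim: r => [|a r IH].
  rewrite big_nil; apply: (rderiv_ext (f := cst 0)); first by move=> s; rewrite big_nil.
case Pa: (P a).
- rewrite big_cons Pa.
  apply: (rderiv_ext (f := F a + (fun s => \sum_(i <- r | P i) F i s))).
    by move=> s; rewrite big_cons Pa.
  by apply: is_deriveD => //; exact: H.
- rewrite big_cons Pa.
  by apply: (rderiv_ext _ IH) => s; rewrite big_cons Pa.
Qed.

Lemma cderiv_ext (f g : R -> R[i]) t d : (forall s, f s = g s) ->
  cderiv f t d -> cderiv g t d.
Proof. by move=> fg; have -> : f = g by apply: funext. Qed.
Lemma cderiv_eq (f : R -> R[i]) t d d' : cderiv f t d -> d = d' -> cderiv f t d'.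
Proof. by move=> ? <-. Qed.

Lemma cderiv_cst (c : R[i]) t : cderiv (fun _ => c) t 0.
Proof. by split; apply: is_derive_cst. Qed.

Lemma cderivD (f g : R -> R[i]) t df dg : cderiv f t df -> cderiv g t dg ->
  cderiv (fun s => f s + g s) t (df + dg).
Proof.
move=> [f1 f2] [g1 g2]; split.
  rewrite xReD; apply: (rderiv_ext (f := (fun s => complex.Re (f s)) + (fun s => complex.Re (g s)))).
    by move=> s; rewrite xReD.
rewrite xImD; apply: (rderiv_ext (f := (fun s => complex.Im (f s)) + (fun s => complex.Im (g s)))).
  by move=> s; rewrite xImD.
Qed.

Lemma cderivN (f : R -> R[i]) t df : cderiv f t df -> cderiv (fun s => - f s) t (- df).
Proof.
move=> [f1 f2]; split.
  rewrite xReN; apply: (rderiv_ext (f := - (fun s => complex.Re (f s)))).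
    by move=> s; rewrite xReN.
rewrite xImN; apply: (rderiv_ext (f := - (fun s => complex.Im (f s)))).
  by move=> s; rewrite xImN.
Qed.

Lemma cderivB (f g : R -> R[i]) t df dg : cderiv f t df -> cderiv g t dg ->
  cderiv (fun s => f s - g s) t (df - dg).
Proof. by move=> Hf Hg; apply: cderivD => //; apply: cderivN. Qed.

Lemma cderiv_sum (I : Type) (r : seq I) (P : pred I) (F : I -> R -> R[i]) (dF : I -> R[i]) t :
  (forall i, P i -> cderiv (F i) t (dF i)) ->
  cderiv (fun s => \sum_(i <- r | P i) F i s) t (\sum_(i <- r | P i) dF i).
Proof.
move=> H; split.
  rewrite xRe_sum; apply: (rderiv_ext (f := fun s => \sum_(i <- r | P i) complex.Re (F i s))).
    by move=> s; rewrite xRe_sum.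
  by apply: rderiv_sum => i Pi; case: (H i Pi).
rewrite xIm_sum; apply: (rderiv_ext (f := fun s => \sum_(i <- r | P i) complex.Im (F i s))).
  by move=> s; rewrite xIm_sum.
by apply: rderiv_sum => i Pi; case: (H i Pi).
Qed.

Lemma cderivM (f g : R -> R[i]) t df dg : cderiv f t df -> cderiv g t dg ->
  cderiv (fun s => f s * g s) t (df * g t + f t * dg).
Proof.
move=> [f1 f2] [g1 g2]; split.
  have H := is_deriveB (is_deriveM f1 g1) (is_deriveM f2 g2).
  have E : forall s, ((fun s => complex.Re (f s)) * (fun s => complex.Re (g s))
     - (fun s => complex.Im (f s)) * (fun s => complex.Im (g s))) s = complex.Re (f s * g s).
    by move=> s; rewrite xReM.
  apply: (rderiv_ext E); apply: (is_derive_eq H).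
  rewrite xReD !xReM /GRing.scale /=; ring.
have H := is_deriveD (is_deriveM f1 g2) (is_deriveM f2 g1).
have E : forall s, ((fun s => complex.Re (f s)) * (fun s => complex.Im (g s))
   + (fun s => complex.Im (f s)) * (fun s => complex.Re (g s))) s = complex.Im (f s * g s).
  by move=> s; rewrite xImM.
apply: (rderiv_ext E); apply: (is_derive_eq H).
rewrite xImD !xImM /GRing.scale /=; ring.
Qed.

Lemma cderivJ (f : R -> R[i]) t df : cderiv f t df -> cderiv (fun s => (conjc (f s))) t ((conjc df)).
Proof.
move=> [f1 f2]; split.
  by rewrite xReJ; apply: (rderiv_ext _ f1) => s; rewrite xReJ.
rewrite xImJ; apply: (rderiv_ext (f := - (fun s => complex.Im (f s)))).
  by move=> s; rewrite xImJ.
Qed.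

Lemma cderivZ (c : R[i]) (f : R -> R[i]) t df : cderiv f t df ->
  cderiv (fun s => c * f s) t (c * df).
Proof.
move=> H; apply: cderiv_eq; first exact: (cderivM (cderiv_cst c t) H).
by rewrite mul0r add0r.
Qed.

End Aux.



Section Mx.
Variable R : realType.
Local Notation C := (R[i]).

Lemma hadjE p q (A : 'M[C]_(p, q)) i j : adj A i j = (conjc (A j i)).
Proof. by rewrite /adj !mxE. Qed.

Lemma hadjK p q (A : 'M[C]_(p, q)) : adj (adj A) = A.
Proof. by apply/matrixP => i j; rewrite !hadjE conjcK. Qed.

Lemma hadjD p q (A B : 'M[C]_(p, q)) : adj (A + B) = adj A + adj B.
Proof. by apply/matrixP => i j; rewrite !mxE rmorphD. Qed.

Lemma hadjN p q (A : 'M[C]_(p, q)) : adj (- A) = - adj A.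
Proof. by apply/matrixP => i j; rewrite !mxE rmorphN. Qed.

Lemma hadjB p q (A B : 'M[C]_(p, q)) : adj (A - B) = adj A - adj B.
Proof. by rewrite hadjD hadjN. Qed.

Lemma hadj0 p q : adj (0 : 'M[C]_(p, q)) = 0.
Proof. by apply/matrixP => i j; rewrite !mxE conjc0. Qed.

Lemma hadjZ p q (a : C) (A : 'M[C]_(p, q)) : adj (a *: A) = (conjc a) *: adj A.
Proof. by apply/matrixP => i j; rewrite !mxE rmorphM. Qed.

Lemma hadj_sum p q (I : Type) (r : seq I) (P : pred I) (F : I -> 'M[C]_(p, q)) :
  adj (\sum_(i <- r | P i) F i) = \sum_(i <- r | P i) adj (F i).
Proof. exact: (big_morph _ (@hadjD p q) (@hadj0 p q)). Qed.

Lemma hadjM p q r (A : 'M[C]_(p, q)) (B : 'M[C]_(q, r)) : adj (A *m B) = adj B *m adj A.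
Proof.
apply/matrixP => i j; rewrite hadjE !mxE rmorph_sum; apply: eq_bigr => k _.
by rewrite rmorphM !hadjE mulrC.
Qed.

Lemma hadj1 p : adj (1%:M : 'M[C]_p) = 1%:M.
Proof.
apply/matrixP => i j; rewrite hadjE !mxE.
by rewrite conjc_nat eq_sym. Qed.

Lemma frobE p (A B : 'M[C]_p) : frob A B = \sum_i \sum_k (conjc (A k i)) * B k i.
Proof.
rewrite /frob /mxtrace; apply: eq_bigr => i _; rewrite mxE.
by apply: eq_bigr => k _; rewrite hadjE.
Qed.

Lemma frobJ p (A B : 'M[C]_p) : (conjc (frob A B)) = frob B A.
Proof.
rewrite !frobE rmorph_sum; apply: eq_bigr => i _; rewrite rmorph_sum.
by apply: eq_bigr => k _; rewrite rmorphM /= conjcK mulrC.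
Qed.

Lemma frobDr p (A B B' : 'M[C]_p) : frob A (B + B') = frob A B + frob A B'.
Proof. by rewrite /frob mulmxDr mxtraceD. Qed.
Lemma frob0r p (A : 'M[C]_p) : frob A 0 = 0.
Proof. by rewrite /frob mulmx0 mxtrace0. Qed.
Lemma frobZr p (A B : 'M[C]_p) a : frob A (a *: B) = a * frob A B.
Proof. by rewrite /frob -scalemxAr mxtraceZ. Qed.
Lemma frobNr p (A B : 'M[C]_p) : frob A (- B) = - frob A B.
Proof. by rewrite -scaleN1r frobZr mulN1r. Qed.
Lemma frobBr p (A B B' : 'M[C]_p) : frob A (B - B') = frob A B - frob A B'.
Proof. by rewrite frobDr frobNr. Qed.
Lemma frobDl p (A A' B : 'M[C]_p) : frob (A + A') B = frob A B + frob A' B.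
Proof. by rewrite /frob hadjD mulmxDl mxtraceD. Qed.
Lemma frob0l p (B : 'M[C]_p) : frob 0 B = 0.
Proof. by rewrite /frob hadj0 mul0mx mxtrace0. Qed.
Lemma frobZl p (A B : 'M[C]_p) a : frob (a *: A) B = (conjc a) * frob A B.
Proof. by rewrite /frob hadjZ -scalemxAl mxtraceZ. Qed.
Lemma frobNl p (A B : 'M[C]_p) : frob (- A) B = - frob A B.
Proof. by rewrite -scaleN1r frobZl rmorphN rmorph1 mulN1r. Qed.
Lemma frobBl p (A A' B : 'M[C]_p) : frob (A - A') B = frob A B - frob A' B.
Proof. by rewrite frobDl frobNl. Qed.
Lemma frob_sumr p (A : 'M[C]_p) (I : Type) (r : seq I) (P : pred I) F :
  frob A (\sum_(i <- r | P i) F i) = \sum_(i <- r | P i) frob A (F i).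
Proof. exact: (big_morph _ (@frobDr p A) (@frob0r p A)). Qed.
Lemma frob_suml p (B : 'M[C]_p) (I : Type) (r : seq I) (P : pred I) F :
  frob (\sum_(i <- r | P i) F i) B = \sum_(i <- r | P i) frob (F i) B.
Proof. exact: (big_morph (fun A => frob A B) (fun A A' => @frobDl p A A' B) (@frob0l p B)). Qed.

Lemma mx_deriv_adjmul p (X Y : R -> 'M[C]_p) t DX DY :
  mx_deriv X t DX -> mx_deriv Y t DY ->
  mx_deriv (fun s => adj (X s) *m Y s) t (adj DX *m Y t + adj (X t) *m DY).
Proof.
move=> HX HY a b.
apply: (@cderiv_ext _ (fun s => \sum_k (conjc (X s k a)) * Y s k b)).
  by move=> s; rewrite mxE; apply: eq_bigr => k _; rewrite hadjE.
apply: cderiv_eq; first apply: cderiv_sum => k _.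
  exact: (cderivM (cderivJ (HX k a)) (HY k b)).
rewrite !mxE -big_split /=; apply: eq_bigr => k _; rewrite !hadjE.
by [].
Qed.

Lemma cderiv_frob p (X Y : R -> 'M[C]_p) t DX DY :
  mx_deriv X t DX -> mx_deriv Y t DY ->
  cderiv (fun s => frob (X s) (Y s)) t (frob DX (Y t) + frob (X t) DY).
Proof.
move=> HX HY; have H := mx_deriv_adjmul HX HY.
apply: (@cderiv_ext _ (fun s => \sum_i (adj (X s) *m Y s) i i)) => //.
apply: cderiv_eq; first by apply: cderiv_sum => i _; exact: H.
by rewrite /frob -mxtraceD /mxtrace; apply: eq_bigr => i _; rewrite !mxE.
Qed.

End Mx.



Section Alg.
Variable R : realType.
Local Notation C := (R[i]).

Lemma frob_DD p (X M : 'M[C]_p) : unitary X ->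
  let D := M - X *m adj M *m X in frob D M + frob M D = frob D D.
Proof.
move=> HX D; rewrite /D !frobBl !frobBr.
set Q := X *m adj M *m X.
suff -> : frob Q Q = frob M M by ring.
have HX' : X *m adj X = 1%:M by apply: mulmx1C.
rewrite /frob /Q !hadjM hadjK.
have -> : adj X *m (M *m adj X) *m (X *m adj M *m X) = adj X *m (M *m adj M *m X).
  by rewrite !mulmxA -[adj X *m M *m adj X *m X]mulmxA HX mulmx1.
by rewrite mxtrace_mulC -!mulmxA HX' mulmx1 mxtrace_mulC.
Qed.

Lemma flow_rhsE N p q kappa (X : 'I_N -> R -> 'M[C]_p) (Y : 'I_N -> R -> 'M[C]_q) j t :
  let M := \sum_k frob (Y j t) (Y k t) *: X k t in
  flow_rhs kappa X Y j t = (kappa / N%:R)%:C *: (M - X j t *m adj M *m X j t).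
Proof.
move=> M; rewrite /flow_rhs sumrB; congr (_ *: (_ - _)).
rewrite /M hadj_sum mulmx_sumr mulmx_suml; apply: eq_bigr => k _.
by rewrite hadjZ frobJ -scalemxAr -scalemxAl. Qed.

Lemma frob_real p (A : 'M[C]_p) : frob A A = (frob_norm2 A)%:C.
Proof.
have H := frobJ A A; rewrite /frob_norm2.
move: H; case: (frob A A) => a b /= [] Hb.
by apply/eqP; rewrite eq_complex /= eqxx /=; apply/eqP; lra.
Qed.

Lemma key_sum N p q kappa (X : 'I_N -> R -> 'M[C]_p) (Y : 'I_N -> R -> 'M[C]_q) t :
  kappa / N%:R != 0 -> (forall j, unitary (X j t)) ->
  \sum_a \sum_b ((frob (flow_rhs kappa X Y a t) (X b t) + frob (X a t) (flow_rhs kappa X Y b t))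
                 * frob (Y a t) (Y b t))
  = ((kappa / N%:R)^-1)%:C * \sum_a frob (flow_rhs kappa X Y a t) (flow_rhs kappa X Y a t).
Proof.
move=> c0 HU.
set F := flow_rhs kappa X Y.
pose M a := \sum_k frob (Y a t) (Y k t) *: X k t.
have S1 : \sum_a \sum_b (frob (F a t) (X b t) * frob (Y a t) (Y b t))
   = \sum_a frob (F a t) (M a).
  apply: eq_bigr => a _; rewrite /M frob_sumr; apply: eq_bigr => b _.
  by rewrite frobZr mulrC.
have S2 : \sum_a \sum_b (frob (X a t) (F b t) * frob (Y a t) (Y b t))
   = \sum_b frob (M b) (F b t).
  rewrite exchange_big /=; apply: eq_bigr => b _; rewrite /M frob_suml.
  apply: eq_bigr => a _; rewrite frobZl frobJ mulrC.
  by [].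
rewrite (eq_bigr (fun a => \sum_b (frob (F a t) (X b t) * frob (Y a t) (Y b t))
   + \sum_b (frob (X a t) (F b t) * frob (Y a t) (Y b t)))); last first.
  by move=> a _; rewrite -big_split /=; apply: eq_bigr => b _; rewrite mulrDl.
rewrite big_split /= S1 S2 -big_split /= mulr_sumr; apply: eq_bigr => a _.
have -> : F a t = (kappa / N%:R)%:C *: (M a - X a t *m adj (M a) *m X a t).
  exact: flow_rhsE.
have HD := frob_DD (M a) (HU a).
rewrite /= in HD.
set D := M a - _ in HD *.
rewrite frobZl frobZr frobZl frobZr conjc_real -mulrDr HD.
rewrite mulrA mulrA -rmorphM mulVf // rmorph1 mul1r.
by [].
Qed.

Lemma cderiv_energy N p q (U : 'I_N -> R -> 'M[C]_p) (V : 'I_N -> R -> 'M[C]_q) t DU DV :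
  (forall j, mx_deriv (U j) t (DU j)) -> (forall j, mx_deriv (V j) t (DV j)) ->
  cderiv (energy U V) t
   (- ((1 / (N%:R ^+ 2))%:C *
      \sum_a \sum_b ((frob (DU a) (U b t) + frob (U a t) (DU b)) * frob (V a t) (V b t)
                    + frob (U a t) (U b t) * (frob (DV a) (V b t) + frob (V a t) (DV b))))).
Proof.
move=> HU HV.
apply: (@cderiv_ext _ (fun s => 1 - (1 / (N%:R ^+ 2))%:C *
      \sum_(a < N) \sum_(b < N) (frob (U a s) (U b s) * frob (V a s) (V b s)))) => //.
apply: cderiv_eq.
  apply: cderivB; first exact: cderiv_cst.
  apply: cderivZ; apply: cderiv_sum => a _; apply: cderiv_sum => b _.
  by apply: cderivM; apply: cderiv_frob.
by rewrite sub0r.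
Qed.

End Alg.



Section Nrm.
Variable R : realType.
Local Notation C := (R[i]).

Definition nrm (w : C) : R := `|complex.Re w| + `|complex.Im w|.

Lemma nrm_ge0 w : 0 <= nrm w.
Proof. by rewrite /nrm addr_ge0. Qed.

Lemma nrmD x y : nrm (x + y) <= nrm x + nrm y.
Proof.
rewrite /nrm xReD xImD.
have := ler_normD (complex.Re x) (complex.Re y).
have := ler_normD (complex.Im x) (complex.Im y). lra.
Qed.

Lemma nrmN x : nrm (- x) = nrm x.
Proof. by rewrite /nrm xReN xImN !normrN. Qed.

Lemma nrmJ x : nrm (conjc x) = nrm x.
Proof. by rewrite /nrm xReJ xImJ normrN. Qed.

Lemma nrmM x y : nrm (x * y) <= nrm x * nrm y.
Proof.
rewrite /nrm xReM xImM.
set a := complex.Re x; set b := complex.Im x; set c := complex.Re y; set d := complex.Im y.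
have h1 := ler_normB (a * c) (b * d).
have h2 := ler_normD (a * d) (b * c).
rewrite !normrM in h1 h2.
have := normr_ge0 a; have := normr_ge0 b; have := normr_ge0 c; have := normr_ge0 d.
nra.
Qed.

Lemma nrmC (k : R) : nrm (k%:C) = `|k|.
Proof. by rewrite /nrm xReC xImC normr0 addr0. Qed.

Lemma nrm0 : nrm 0 = 0.
Proof. by rewrite /nrm xRe0 xIm0 normr0 addr0. Qed.

Lemma nrm_sum (I : Type) (r : seq I) (P : pred I) (F : I -> C) :
  nrm (\sum_(i <- r | P i) F i) <= \sum_(i <- r | P i) nrm (F i).
Proof.
elim: r => [|a r IH]; first by rewrite !big_nil nrm0.
rewrite !big_cons; case: (P a) => //.
by apply: le_trans (nrmD _ _) _; rewrite lerD2l.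
Qed.

Lemma ler_sum_const n (F : 'I_n -> R) b : (forall i, F i <= b) ->
  \sum_(i < n) F i <= n%:R * b.
Proof.
move=> H; apply: le_trans (ler_sum _ (fun i _ => H i)) _.
by rewrite sumr_const card_ord mulr_natl.
Qed.

Lemma nrm_sum_bound n (F : 'I_n -> C) b : (forall i, nrm (F i) <= b) ->
  nrm (\sum_(i < n) F i) <= n%:R * b.
Proof. by move=> H; apply: le_trans (nrm_sum _ _ _) (ler_sum_const H). Qed.

Lemma nrmM_le x y a b : nrm x <= a -> nrm y <= b -> nrm (x * y) <= a * b.
Proof.
move=> ha hb; apply: le_trans (nrmM x y) _.
apply: ler_pM => //; exact: nrm_ge0.
Qed.

Lemma ReIm_le_nrm z w :
  complex.Re z * complex.Re w + complex.Im z * complex.Im w <= nrm z * nrm w.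
Proof.
rewrite /nrm.
have := ler_norm (complex.Re z * complex.Re w).
have := ler_norm (complex.Im z * complex.Im w).
rewrite !normrM.
have := normr_ge0 (complex.Re z); have := normr_ge0 (complex.Im z).
have := normr_ge0 (complex.Re w); have := normr_ge0 (complex.Im w).
nra.
Qed.

Lemma nrm_pair z w (phi : R) :
  complex.Re z * complex.Re z + complex.Im z * complex.Im z <= phi ->
  complex.Re w * complex.Re w + complex.Im w * complex.Im w <= phi ->
  nrm z * nrm w <= 2 * phi.
Proof.
rewrite /nrm.
have e1 := real_normK (num_real (complex.Re z)).
have e2 := real_normK (num_real (complex.Im z)).
have e3 := real_normK (num_real (complex.Re w)).
have e4 := real_normK (num_real (complex.Im w)).
rewrite !expr2 in e1 e2 e3 e4.
rewrite -e1 -e2 -e3 -e4.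
set a := `|_|; set b := `|_|; set c := `|_|; set d := `|_|.
move=> h1 h2.
have q1 : 0 <= (a + b - c - d) ^+ 2 by apply: sqr_ge0.
have q2 : 0 <= (a - b) ^+ 2 by apply: sqr_ge0.
have q3 : 0 <= (c - d) ^+ 2 by apply: sqr_ge0.
rewrite !expr2 in q1 q2 q3.
nra.
Qed.

Lemma le_sum_term (I : finType) (F : I -> R) i : (forall j, 0 <= F j) ->
  F i <= \sum_j F j.
Proof.
move=> H; rewrite (bigD1 i) //= lerDl; apply: sumr_ge0 => j _; exact: H.
Qed.

End Nrm.

Section Cont.
Variable R : realType.
Local Notation C := (R[i]).
Variable A : set R.

Lemma wcD (f g : R -> R) : {within A, continuous f} -> {within A, continuous g} ->
  {within A, continuous (fun s => f s + g s)}.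
Proof. by move=> hf hg x; apply: continuousD; [exact: hf | exact: hg]. Qed.
Lemma wcN (f : R -> R) : {within A, continuous f} ->
  {within A, continuous (fun s => - f s)}.
Proof. by move=> hf x; apply: continuousN; exact: hf. Qed.
Lemma wcM (f g : R -> R) : {within A, continuous f} -> {within A, continuous g} ->
  {within A, continuous (fun s => f s * g s)}.
Proof. by move=> hf hg x; apply: continuousM; [exact: hf | exact: hg]. Qed.
Lemma wc_cst (c : R) : {within A, continuous (fun _ : R => c)}.
Proof. by apply: continuous_subspaceT => x; exact: cst_continuous. Qed.
Lemma wc_ext (f g : R -> R) : (forall s, f s = g s) -> {within A, continuous f} ->
  {within A, continuous g}.
Proof. by move=> fg; have -> : f = g by apply: funext. Qed.
Lemma wc_sum (I : Type) (r : seq I) (P : pred I) (F : I -> R -> R) :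
  (forall i, P i -> {within A, continuous (F i)}) ->
  {within A, continuous (fun s => \sum_(i <- r | P i) F i s)}.
Proof.
move=> H; elim: r => [|a r IH].
  by apply: (wc_ext (f := fun _ => 0)); [move=> s; rewrite big_nil | exact: wc_cst].
case Pa: (P a).
  apply: (wc_ext (f := fun s => F a s + \sum_(i <- r | P i) F i s)).
    by move=> s; rewrite big_cons Pa.
  by apply: wcD => //; exact: H.
by apply: (wc_ext (f := fun s => \sum_(i <- r | P i) F i s)) => // s; rewrite big_cons Pa.
Qed.
Lemma wc_norm (f : R -> R) : {within A, continuous f} ->
  {within A, continuous (fun s => `|f s|)}.
Proof.
move=> hf x; apply: (continuous_comp (hf x)); exact: norm_continuous.
Qed.

Definition cc (f : R -> C) :=
  {within A, continuous (fun s => complex.Re (f s))} /\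
  {within A, continuous (fun s => complex.Im (f s))}.

Lemma cc_ext (f g : R -> C) : (forall s, f s = g s) -> cc f -> cc g.
Proof. by move=> fg; have -> : f = g by apply: funext. Qed.
Lemma ccD (f g : R -> C) : cc f -> cc g -> cc (fun s => f s + g s).
Proof.
move=> [f1 f2] [g1 g2]; split.
  by apply: (wc_ext (f := fun s => complex.Re (f s) + complex.Re (g s))) => [s|]; [rewrite xReD | exact: wcD].
by apply: (wc_ext (f := fun s => complex.Im (f s) + complex.Im (g s))) => [s|]; [rewrite xImD | exact: wcD].
Qed.
Lemma ccN (f : R -> C) : cc f -> cc (fun s => - f s).
Proof.
move=> [f1 f2]; split.
  by apply: (wc_ext (f := fun s => - complex.Re (f s))) => [s|]; [rewrite xReN | exact: wcN].
by apply: (wc_ext (f := fun s => - complex.Im (f s))) => [s|]; [rewrite xImN | exact: wcN].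
Qed.
Lemma ccM (f g : R -> C) : cc f -> cc g -> cc (fun s => f s * g s).
Proof.
move=> [f1 f2] [g1 g2]; split.
  apply: (wc_ext (f := fun s => complex.Re (f s) * complex.Re (g s) + - (complex.Im (f s) * complex.Im (g s)))).
    by move=> s; rewrite xReM.
  by apply: wcD; [exact: wcM | apply: wcN; exact: wcM].
apply: (wc_ext (f := fun s => complex.Re (f s) * complex.Im (g s) + complex.Im (f s) * complex.Re (g s))).
  by move=> s; rewrite xImM.
by apply: wcD; exact: wcM.
Qed.
Lemma ccJ (f : R -> C) : cc f -> cc (fun s => conjc (f s)).
Proof.
move=> [f1 f2]; split.
  by apply: (wc_ext (f := fun s => complex.Re (f s))) => [s|]; [rewrite xReJ | exact: f1].
by apply: (wc_ext (f := fun s => - complex.Im (f s))) => [s|]; [rewrite xImJ | exact: wcN].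
Qed.
Lemma cc_cst (c : C) : cc (fun _ => c).
Proof. by split; exact: wc_cst. Qed.
Lemma cc_sum (I : Type) (r : seq I) (P : pred I) (F : I -> R -> C) :
  (forall i, P i -> cc (F i)) -> cc (fun s => \sum_(i <- r | P i) F i s).
Proof.
move=> H; split.
  apply: (wc_ext (f := fun s => \sum_(i <- r | P i) complex.Re (F i s))).
    by move=> s; rewrite xRe_sum.
  by apply: wc_sum => i Pi; case: (H i Pi).
apply: (wc_ext (f := fun s => \sum_(i <- r | P i) complex.Im (F i s))).
  by move=> s; rewrite xIm_sum.
by apply: wc_sum => i Pi; case: (H i Pi).
Qed.
Lemma wc_nrm (f : R -> C) : cc f -> {within A, continuous (fun s => nrm (f s))}.
Proof. by move=> [f1 f2]; apply: wcD; apply: wc_norm. Qed.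

End Cont.

Section Gronwall.
Variable R : realType.

Lemma is_derive_cont (f : R -> R) (x d : R) : is_derive x 1 f d -> {for x, continuous f}.
Proof.
move=> H; apply: differentiable_continuous; apply/derivable1_diffP.
by case: H.
Qed.

Lemma gronwall (f df : R -> R) (K T : R) : 0 < T ->
  {within `[0, T], continuous f} -> f 0 = 0 ->
  (forall s, s \in `]0, T[%R -> is_derive s 1 f (df s)) ->
  (forall s, s \in `]0, T[%R -> df s <= K * f s) -> f T <= 0.
Proof.
move=> T0 fc f0 fd fb.
pose g := fun s : R => - (K * s).
have gd : forall x : R, is_derive x 1 g (- K).
  move=> x; have H := is_deriveN (is_deriveZ K (@is_derive_id _ R^o x 1)).
  apply: (rderiv_ext (f := - (K \*: id))) => //.
  by apply: (is_derive_eq H); rewrite /GRing.scale /= mulr1.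
pose h := expR \o g.
have hd : forall x : R, is_derive x 1 h (expR (g x) * - K).
  by move=> x; apply: is_derive1_comp.
pose psi := f * h.
have psid : forall x : R, x \in `]0, T[%R ->
    is_derive x 1 psi (f x * (expR (g x) * - K) + h x * df x).
  move=> x xin; have := is_deriveM (fd x xin) (hd x).
  by rewrite /GRing.scale /=.
have psic : {within `[0, T], continuous psi}.
  move=> x; apply: continuousM; first exact: fc.
  by apply: (continuous_subspaceT (f := h)) => y; exact: (is_derive_cont (hd y)).
have [c cin] := MVT T0 psid psic.
have := fb c cin.
have ec := expR_gt0 (g c).
have eT := expR_gt0 (g T).
move=> hb E.
have E1 : psi T = f T * expR (g T) by [].
have E0 : psi 0 = f 0 * h 0 by [].
rewrite E0 f0 mul0r subr0 subr0 E1 in E.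
have : f T * expR (g T) <= 0.
  rewrite E /h /=.
  have -> : f c * (expR (g c) * - K) + expR (g c) * df c = expR (g c) * (df c - K * f c).
    by ring.
  apply: mulr_le0_ge0; last exact: ltW.
  apply: mulr_ge0_le0; first exact: ltW.
  by rewrite subr_le0.
by rewrite pmulr_lle0.
Qed.

End Gronwall.



Lemma scale_rearr (K : pzRingType) (V : lmodType K) (c : K) (a b d e : V) :
  c *: (a - b) + c *: (d - e) = c *: (a - e) + c *: (d - b).
Proof.
rewrite !scalerBr.
move: (c *: a) (c *: b) (c *: d) (c *: e) => u v w z.
by rewrite addrACA [RHS]addrACA [- z + - v]addrC.
Qed.

Section Pres.
Variable R : realType.
Local Notation C := (R[i]).
Variables (N p q : nat) (kappa : R).
Variables (X : 'I_N -> R -> 'M[C]_p) (Y : 'I_N -> R -> 'M[C]_q).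

Definition Mm j s := \sum_k frob (Y j s) (Y k s) *: X k s.
Definition Zm j s : 'M[C]_p := 1%:M - adj (X j s) *m X j s.
Definition Pm j s := (kappa / N%:R)%:C *: (adj (Mm j s) *m X j s).

Lemma Z_alg j s :
  adj (flow_rhs kappa X Y j s) *m X j s + adj (X j s) *m flow_rhs kappa X Y j s
  = Zm j s *m Pm j s + adj (Pm j s) *m Zm j s.
Proof.
rewrite flow_rhsE.
rewrite /Zm /Pm -/(Mm j s).
set c := (kappa / N%:R)%:C.
set A := X j s; set M := Mm j s.
rewrite !hadjZ.
rewrite conjc_real.
rewrite !hadjB !hadjM !hadjK.
rewrite -!scalemxAl -!scalemxAr.
rewrite !mulmxBl !mulmxBr !mul1mx !mulmxA.
set a := adj M *m A; set b := adj A *m M *m adj A *m A.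
set d := adj A *m M; set e := adj A *m A *m adj M *m A.
rewrite (mulmx1 d).
exact: scale_rearr.
Qed.


Lemma Zderiv j s :
  (forall j, mx_deriv (X j) s (flow_rhs kappa X Y j s)) ->
  mx_deriv (Zm j) s (- (Zm j s *m Pm j s + adj (Pm j s) *m Zm j s)).
Proof.
move=> HX a b.
have H := mx_deriv_adjmul (HX j) (HX j) a b.
apply: (@cderiv_ext _ (fun s => (1%:M : 'M[C]_p) a b - (adj (X j s) *m X j s) a b)).
  by move=> s'; rewrite /Zm !mxE.
apply: cderiv_eq; first exact: (cderivB (cderiv_cst _ _) H).
rewrite -Z_alg sub0r [in RHS]mxE. reflexivity.
Qed.


Lemma itv_sub (T : R) : `[0, T] `<=` `[0, +oo[.
Proof. by move=> x; rewrite /= !in_itv /= => /andP[-> _]. Qed.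

Lemma P_bound T : 0 <= T -> (forall j, mx_cont_nonneg (X j)) -> (forall j, mx_cont_nonneg (Y j)) ->
  exists K0, 0 <= K0 /\ forall s, s \in `[0, T]%R -> forall j a b, nrm (Pm j s a b) <= K0.
Proof.
move=> T0 HXc HYc.
have ccX : forall k a b, cc `[0, T] (fun s => X k s a b).
  move=> k a b; case: (HXc k a b) => h1 h2.
  by split; apply: (continuous_subspaceW (@itv_sub T)).
have ccY : forall k a b, cc `[0, T] (fun s => Y k s a b).
  move=> k a b; case: (HYc k a b) => h1 h2.
  by split; apply: (continuous_subspaceW (@itv_sub T)).
pose G s := \sum_k \sum_a \sum_b nrm (X k s a b) + \sum_k \sum_a \sum_b nrm (Y k s a b).
have Gc : {within `[0, T], continuous G}.
  apply: wcD; apply: wc_sum => k _; apply: wc_sum => a _; apply: wc_sum => b _;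
    apply: wc_nrm; [exact: ccX | exact: ccY].
have [c0 _ Hmax] := EVT_max T0 Gc.
set B := G c0.
have B0 : 0 <= B.
  by apply: addr_ge0; apply: sumr_ge0 => k _; apply: sumr_ge0 => a _;
    apply: sumr_ge0 => b _; exact: nrm_ge0.
have hXb : forall s, s \in `[0, T]%R -> forall k a b, nrm (X k s a b) <= B.
  move=> s hs k a b; apply: le_trans (Hmax s hs).
  apply: (le_trans (@le_sum_term _ _ (fun b' => nrm (X k s a b')) b (fun _ => nrm_ge0 _))).
  apply: (le_trans (@le_sum_term _ _ (fun a' => \sum_b' nrm (X k s a' b')) a
     (fun _ => sumr_ge0 _ (fun _ _ => nrm_ge0 _)))).
  apply: (le_trans (@le_sum_term _ _ (fun k' => \sum_a' \sum_b' nrm (X k' s a' b')) k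
     (fun _ => sumr_ge0 _ (fun _ _ => sumr_ge0 _ (fun _ _ => nrm_ge0 _))))).
  rewrite lerDl; apply: sumr_ge0 => k' _; apply: sumr_ge0 => a' _;
    apply: sumr_ge0 => b' _; exact: nrm_ge0.
have hYb : forall s, s \in `[0, T]%R -> forall k a b, nrm (Y k s a b) <= B.
  move=> s hs k a b; apply: le_trans (Hmax s hs).
  apply: (le_trans (@le_sum_term _ _ (fun b' => nrm (Y k s a b')) b (fun _ => nrm_ge0 _))).
  apply: (le_trans (@le_sum_term _ _ (fun a' => \sum_b' nrm (Y k s a' b')) a
     (fun _ => sumr_ge0 _ (fun _ _ => nrm_ge0 _)))).
  apply: (le_trans (@le_sum_term _ _ (fun k' => \sum_a' \sum_b' nrm (Y k' s a' b')) k
     (fun _ => sumr_ge0 _ (fun _ _ => sumr_ge0 _ (fun _ _ => nrm_ge0 _))))).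
  rewrite lerDr; apply: sumr_ge0 => k' _; apply: sumr_ge0 => a' _;
    apply: sumr_ge0 => b' _; exact: nrm_ge0.
pose Gb := q%:R * (q%:R * (B * B)).
pose Mb := N%:R * (Gb * B).
pose Pb := `|kappa / N%:R| * (p%:R * (Mb * B)).
exists Pb; split.
  by rewrite /Pb /Mb /Gb; apply: mulr_ge0 => //; apply: mulr_ge0 => //;
    repeat apply: mulr_ge0 => //.
move=> s hs j a b.
have hG : forall j k, nrm (frob (Y j s) (Y k s)) <= Gb.
  move=> j' k; rewrite frobE; apply: nrm_sum_bound => i; apply: nrm_sum_bound => k'.
  by apply: nrmM_le; [rewrite nrmJ|]; apply: hYb.
have hM : forall a b, nrm (Mm j s a b) <= Mb.
  move=> a' b'; rewrite /Mm summxE; apply: nrm_sum_bound => k; rewrite mxE.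
  by apply: nrmM_le; [exact: hG | exact: hXb].
rewrite /Pm mxE; apply: nrmM_le; first by rewrite nrmC.
rewrite mxE; apply: nrm_sum_bound => d; apply: nrmM_le; last exact: hXb.
by rewrite hadjE nrmJ.
Qed.


Definition sq (w : C) := complex.Re w * complex.Re w + complex.Im w * complex.Im w.

Lemma sq_ge0 w : 0 <= sq w.
Proof. by rewrite /sq -!expr2 addr_ge0 ?sqr_ge0. Qed.

Lemma sq_eq0 w : sq w = 0 -> w = 0.
Proof.
case: w => x y; rewrite /sq /= => h.
have hx : x * x = 0.
  apply/eqP; rewrite eq_le; apply/andP; split; last by rewrite -expr2 sqr_ge0.
  have : 0 <= y * y by rewrite -expr2 sqr_ge0.
  lra.
have hy : y * y = 0 by lra.
move/eqP: hx; rewrite mulf_eq0 orbb => /eqP ->.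
by move/eqP: hy; rewrite mulf_eq0 orbb => /eqP ->.
Qed.

Lemma preserve : (forall j, unitary (X j 0)) -> (forall j, mx_cont_nonneg (X j)) ->
  (forall j, mx_cont_nonneg (Y j)) ->
  (forall s, 0 < s -> forall j, mx_deriv (X j) s (flow_rhs kappa X Y j s)) ->
  forall T, 0 < T -> forall j, unitary (X j T).
Proof.
move=> HU0 HXc HYc HXd T T0.
have [K0 [K00 HK0]] := P_bound (ltW T0) HXc HYc.
pose phi s := \sum_j \sum_a \sum_b sq (Zm j s a b).
pose DZ j s := - (Zm j s *m Pm j s + adj (Pm j s) *m Zm j s).
pose dphi s := \sum_j \sum_a \sum_b (2 * (complex.Re (Zm j s a b) * complex.Re (DZ j s a b)
     + complex.Im (Zm j s a b) * complex.Im (DZ j s a b))).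
pose K := N%:R * (p%:R * (p%:R * (2 * (p%:R * (K0 * 4))))).
have ccX : forall k a b, cc `[0, T] (fun s => X k s a b).
  move=> k a b; case: (HXc k a b) => h1 h2.
  by split; apply: (continuous_subspaceW (@itv_sub T)).
have ccZ : forall j a b, cc `[0, T] (fun s => Zm j s a b).
  move=> j a b.
  apply: (@cc_ext _ _ (fun s => (1%:M : 'M[C]_p) a b - \sum_c conjc (X j s c a) * X j s c b)).
    by move=> s; rewrite /Zm !mxE; under [in RHS]eq_bigr => c _ do rewrite hadjE.
  apply: ccD; first exact: cc_cst.
  apply: ccN; apply: cc_sum => c _; apply: ccM; last exact: ccX.
  by apply: ccJ; exact: ccX.
have phic : {within `[0, T], continuous phi}.
  apply: wc_sum => j _; apply: wc_sum => a _; apply: wc_sum => b _.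
  case: (ccZ j a b) => h1 h2.
  by apply: wcD; apply: wcM.
have phi0 : phi 0 = 0.
  apply: big1 => j _; apply: big1 => a _; apply: big1 => b _.
  by rewrite /Zm (HU0 j) subrr mxE /sq xRe0 xIm0 mulr0 addr0.
have phid : forall s, s \in `]0, T[%R -> is_derive s 1 phi (dphi s).
  move=> s hs; have s0 : 0 < s by move: hs; rewrite in_itv /= => /andP[].
  apply: rderiv_sum => j _; apply: rderiv_sum => a _; apply: rderiv_sum => b _.
  case: (Zderiv j (HXd s s0) a b) => h1 h2.
  have H := is_deriveD (is_deriveM h1 h1) (is_deriveM h2 h2).
  apply: (rderiv_ext _ (is_derive_eq H _)) => //.
  by rewrite /GRing.scale /=; ring.
have phib : forall s, s \in `]0, T[%R -> dphi s <= K * phi s.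
  move=> s hs.
  have hs' : s \in `[0, T]%R.
    by move: hs; rewrite !in_itv /= => /andP[h1 h2]; rewrite !ltW.
  set ph := phi s.
  have hterm : forall j a b, sq (Zm j s a b) <= ph.
    move=> j a b.
    apply: (le_trans (@le_sum_term _ _ (fun b0 => sq (Zm j s a b0)) b (fun _ => sq_ge0 _))).
    apply: (le_trans (@le_sum_term _ _ (fun a0 => \sum_b0 sq (Zm j s a0 b0)) a
       (fun _ => sumr_ge0 _ (fun _ _ => sq_ge0 _)))).
    exact: (@le_sum_term _ _ (fun j0 => \sum_a0 \sum_b0 sq (Zm j0 s a0 b0)) j
       (fun _ => sumr_ge0 _ (fun _ _ => sumr_ge0 _ (fun _ _ => sq_ge0 _)))).
  have hpair : forall j a b a' b', nrm (Zm j s a b) * nrm (Zm j s a' b') <= 2 * ph.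
    by move=> j a b a' b'; apply: nrm_pair; apply: hterm.
  have hdz : forall j a b, nrm (DZ j s a b) <=
      \sum_c (nrm (Zm j s a c) * K0 + K0 * nrm (Zm j s c b)).
    move=> j a b; rewrite /DZ !mxE nrmN big_split /=.
    apply: le_trans (nrmD _ _) _; apply: lerD.
      apply: (le_trans (nrm_sum _ _ _)); apply: ler_sum => c _.
      by apply: nrmM_le; [exact: lexx | exact: HK0].
    apply: (le_trans (nrm_sum _ _ _)); apply: ler_sum => c _.
    apply: nrmM_le; last exact: lexx.
    by rewrite hadjE nrmJ; exact: HK0.
  have hprod : forall j a b,
      2 * (complex.Re (Zm j s a b) * complex.Re (DZ j s a b)
           + complex.Im (Zm j s a b) * complex.Im (DZ j s a b))
      <= 2 * (p%:R * (K0 * 4 * ph)).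
    move=> j a b; apply: ler_wpM2l => //.
    apply: (le_trans (ReIm_le_nrm _ _)).
    apply: (le_trans (ler_wpM2l (nrm_ge0 _) (hdz j a b))).
    rewrite mulr_sumr; apply: ler_sum_const => c.
    have h1 := hpair j a b a c; have h2 := hpair j a b c b.
    nra.
  apply: (@le_trans _ _ (N%:R * (p%:R * (p%:R * (2 * (p%:R * (K0 * 4 * ph))))))).
    apply: ler_sum_const => j; apply: ler_sum_const => a; apply: ler_sum_const => b.
    exact: hprod.
  by rewrite /K le_eqVlt; apply/orP; left; apply/eqP; ring.
have phiT := gronwall T0 phic phi0 phid phib.
have hsq : forall j a b, sq (Zm j T a b) = 0.
  move=> j a b; apply/eqP; rewrite eq_le sq_ge0 andbT.
  apply: le_trans phiT.
  apply: (le_trans (@le_sum_term _ _ (fun b0 => sq (Zm j T a b0)) b (fun _ => sq_ge0 _))).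
  apply: (le_trans (@le_sum_term _ _ (fun a0 => \sum_b0 sq (Zm j T a0 b0)) a
     (fun _ => sumr_ge0 _ (fun _ _ => sq_ge0 _)))).
  exact: (@le_sum_term _ _ (fun j0 => \sum_a0 \sum_b0 sq (Zm j0 T a0 b0)) j
     (fun _ => sumr_ge0 _ (fun _ _ => sumr_ge0 _ (fun _ _ => sq_ge0 _)))).
move=> j.
have Z0 : Zm j T = 0.
  by apply/matrixP => a b; rewrite (sq_eq0 (hsq j a b)) mxE.
by rewrite /unitary; move/eqP: Z0; rewrite /Zm subr_eq0 => /eqP <-.
Qed.

End Pres.


Unset Implicit Arguments. Set Strict Implicit.
Close Scope classical_set_scope.

Theorem mainTheorem12 (R : realType) (N n m : nat) (kappa : R)
  (U : 'I_N -> R -> 'M[R[i]]_n) (V : 'I_N -> R -> 'M[R[i]]_m) :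
  (0 < N)%N -> (0 < n)%N -> (0 < m)%N -> 0 < kappa ->
  (forall j, unitary (U j 0) /\ unitary (V j 0)) ->
  (forall j, mx_cont_nonneg (U j) /\ mx_cont_nonneg (V j)) ->
  (forall t, 0 < t -> forall j,
      mx_deriv (U j) t (flow_rhs kappa U V j t) /\
      mx_deriv (V j) t (flow_rhs kappa V U j t)) ->
  forall t, 0 < t ->
    cderiv (energy U V) t
      ((- (1 / (kappa * N%:R)) *
        \sum_(j < N) (frob_norm2 (flow_rhs kappa U V j t)
                      + frob_norm2 (flow_rhs kappa V U j t)))%:C).
Proof.
move=> N0 n0 m0 k0 HU0 Hc Hd t t0.
have HUt : forall j, unitary (U j t).
  exact: (@preserve R N n m kappa U V (fun j => (HU0 j).1) (fun j => (Hc j).1)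
    (fun j => (Hc j).2) (fun s s0 j => (Hd s s0 j).1) t t0).
have HVt : forall j, unitary (V j t).
  exact: (@preserve R N m n kappa V U (fun j => (HU0 j).2) (fun j => (Hc j).2)
    (fun j => (Hc j).1) (fun s s0 j => (Hd s s0 j).2) t t0).
have HE := cderiv_energy (fun j => (Hd t t0 j).1) (fun j => (Hd t t0 j).2).
apply: (cderiv_eq HE).
have Nn0 : (N%:R : R) != 0 by rewrite pnatr_eq0 -lt0n.
have kn0 : kappa != 0 by rewrite gt_eqF.
have c0 : kappa / N%:R != 0 by rewrite mulf_neq0 // invr_eq0.
rewrite (eq_bigr (fun a => \sum_b ((frob (flow_rhs kappa U V a t) (U b t)
     + frob (U a t) (flow_rhs kappa U V b t)) * frob (V a t) (V b t))
   + \sum_b ((frob (flow_rhs kappa V U a t) (V b t)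
     + frob (V a t) (flow_rhs kappa V U b t)) * frob (U a t) (U b t)))); last first.
  move=> a _; rewrite -big_split /=; apply: eq_bigr => b _.
  by rewrite [X in _ + X]mulrC.
rewrite big_split /= (key_sum _ c0 HUt) (key_sum _ c0 HVt).
rewrite !(eq_bigr _ (fun a _ => frob_real _)) -!rmorph_sum.
rewrite big_split /=.
rewrite -!rmorphM -rmorphD -rmorphM -rmorphN.
congr (_%:C).
set a := \sum_(i < N) frob_norm2 _.
set b := \sum_(i < N) frob_norm2 _.
by field; rewrite kn0 Nn0.
Qed.
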